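(* Let $G$ be a finite group with $d(G) = 2$. Then $G$ is both $1$-flexible and $2$-flexible if and only if $G \cong p^2$ for a prime $p$, or $G \cong p{:}\langle g\rangle$ for a prime $p$ and an element $g \in \mathrm{GL}_1(p)$ of prime order.
   Context: For a finite group $H$, $d(H)$ denotes the minimal size of a generating set of $H$. For an integer $1 \leq k \leq d(G)$, $G$ is called $k$-flexible if for any $x_1,\dots,x_k \in G$ with $d(\langle x_1,\dots,x_k\rangle)=k$ there exist $x_{k+1},\dots,x_{d(G)} \in G$ such that $\langle x_1,\dots,x_{d(G)}\rangle = G$. Here $p^2$ is the elementary abelian group of order $p^2$, and $p{:}\langle g\rangle$ is the semidirect product of the cyclic group $\mathbb{F}_p$ by $\langle g\rangle \leq \mathrm{GL}_1(p)=\mathbb{F}_p^\times$ acting by multiplication. *)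

(* Defs.v *)
From HB Require Import structures.
From mathcomp Require Import all_boot all_order all_algebra all_fingroup all_solvable.
Set Implicit Arguments. Unset Strict Implicit. Unset Printing Implicit Defensive.
Import GRing.Theory.

(* d(A) is MathComp's gen_rank A = 'm(A) (abelian.v): the minimal
   cardinality of a set B with <<B>> = A. *)

Definition flexible (gT : finGroupType) (G : {group gT}) (k : nat) : Prop :=
  forall xs : k.-tuple gT, {subset xs <= G} ->
    gen_rank <<[set:: xs]>>%g = k ->
    exists ys : (gen_rank G - k).-tuple gT,
      {subset ys <= G} /\ <<[set:: xs ++ ys]>>%g = G.

(* The group p:<g> (g in GL_1(p) = units of F_p), realised as the group of
   affine permutations x |-> a x + b of F_p with a in <g>, b in F_p. *)
Definition affine_grp (p : nat) (g : {unit 'F_p}) : {set {perm 'F_p}} :=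
  [set s : {perm 'F_p} | [exists u in <[g]>%g, exists b : 'F_p,
      [forall x : 'F_p, s x == (val u * x + b)%R]]].

(* Main.v *)
Require Import Defs.
From mathcomp Require Import all_boot all_order all_algebra all_fingroup all_solvable.
From mathcomp Require Import zify ring.
Set Implicit Arguments. Unset Strict Implicit. Unset Printing Implicit Defensive.
Import GRing.Theory.

Section PartP1.
Local Open Scope group_scope.

Section P1.
Variable gT : finGroupType.
Implicit Types G H K : {group gT}.

Lemma grank_eq0 K : ('m(K) == 0%N) = (K :==: 1).
Proof.
apply/idP/idP.
  have [B <- cB] := grank_witness K; rewrite -cB cards_eq0 => /eqP BE.
  by apply/eqP; rewrite BE; apply: gen0.
move/eqP=> ->; have := grank_min (set0 : {set gT}).
by rewrite (gen0 gT) cards0 leqn0.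
Qed.

Lemma grank_le1 K : ('m(K) <= 1) = cyclic K.
Proof.
apply/idP/idP.
  have [B <- cB] := grank_witness K; rewrite -cB leq_eqVlt ltnS leqn0.
  case/orP=> [/cards1P[b ->] | ]; first exact: cycle_cyclic.
  by rewrite cards_eq0 => /eqP BE; rewrite BE (gen0 gT) cyclic1.
case/cyclicP=> x ->; have := grank_min [set x]; rewrite cards1; exact.
Qed.

Lemma grank_cycle (x : gT) : x != 1 -> 'm(<[x]>) = 1%N.
Proof.
move=> ntx; apply/eqP; rewrite eqn_leq grank_le1 cycle_cyclic /=.
by rewrite lt0n grank_eq0 cycle_eq1.
Qed.

Lemma grank_le2 (x y : gT) : 'm(<<[set x; y]>>) <= 2.
Proof. by apply: leq_trans (grank_min _) _; rewrite cards2; case: (x != y). Qed.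

Lemma set2_tuple (x y : gT) : [set:: [:: x; y]] = [set x; y].
Proof. by rewrite !set_cons set_nil setU0. Qed.

Lemma set1_tuple (x : gT) : [set:: [:: x]] = [set x].
Proof. by rewrite set_cons set_nil setU0. Qed.

Definition PA G := forall H : {group gT}, H \proper G -> cyclic H.
Definition PB G := forall x, x \in G -> x != 1 ->
   exists2 y, y \in G & <<[set x; y]>> = G.

Lemma flex_PAB G : 'm(G) = 2 -> (flexible G 1 /\ flexible G 2) <-> (PA G /\ PB G).
Proof.
move=> mG; split.
  case=> [f1 f2]; split.
    move=> H /properP[sHG [z Gz Hnz]]; apply: contraT => ncH; exfalso.
    pose gP := fun K : {group gT} => cyclic K && (K \subset H).
    have gP1 : gP 1%G by rewrite /gP cyclic1 sub1G.
    have [C maxC _] := maxgroup_exists gP1.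
    case/maxgroupP: maxC => /andP[cC sCH] maxC.
    have [c defC] := cyclicP cC.
    have /subsetPn[h Hh Ch] : ~~ (H \subset C).
      apply: contra ncH => sHC.
      by have -> : H :=: C by apply/eqP; rewrite eqEsubset sHC sCH.
    pose xs := [tuple c; h].
    have sxs : {subset xs <= G}.
      move=> u; rewrite !inE => /orP[/eqP-> | /eqP->]; last exact: (subsetP sHG).
      by apply: (subsetP sHG); apply: (subsetP sCH); rewrite defC cycle_id.
    have gen2 : <<[set c; h]>> \subset H.
      by rewrite gen_subG; apply/subsetP=> u; rewrite !inE => /orP[/eqP-> | /eqP->] //;
        apply: (subsetP sCH); rewrite defC cycle_id.
    have nc2 : ~~ cyclic <<[set c; h]>>.
      apply/negP=> c2.
      have eqC : <<[set c; h]>> :=: C.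
        apply: (maxC <<[set c; h]>>%G); first by rewrite /gP c2 gen2.
        by rewrite defC cycle_subG mem_gen // !inE eqxx.
      by move: Ch; rewrite -eqC mem_gen // !inE eqxx orbT.
    have m2 : 'm(<<[set:: xs]>>) = 2.
      rewrite /= set2_tuple; apply/eqP; rewrite eqn_leq grank_le2 /=.
      by rewrite ltnNge grank_le1.
    have [ys [_ eqG]] := f2 xs sxs m2.
    move: ys eqG; rewrite mG subnn => ys.
    rewrite (size0nil (size_tuple ys)) cats0 /= set2_tuple => eqG.
    by move: z Gz Hnz; rewrite -eqG => z Gz /negP[]; apply: (subsetP gen2).
  move=> x Gx ntx.
  pose xs := [tuple x].
  have sxs : {subset xs <= G} by move=> u; rewrite !inE => /eqP->.
  have m1 : 'm(<<[set:: xs]>>) = 1%N by rewrite /= set1_tuple grank_cycle.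
  have [ys [sys eqG]] := f1 xs sxs m1.
  move: ys sys eqG; rewrite mG => ys; case/tupleP: ys => y ys.
  rewrite tuple0 => sys eqG; exists y; first by apply: sys; rewrite !inE eqxx.
  by rewrite -eqG /= set2_tuple.
case=> [pA pB]; split.
  move=> [s sP] sxs m1; move: sP sxs m1; case: s => [|x [|]] //= sP sxs m1.
  move: m1; rewrite set1_tuple => m1.
  have Gx : x \in G by apply: sxs; rewrite !inE eqxx.
  have ntx : x != 1.
    apply/eqP=> x1; move: m1; rewrite x1 -/(cycle 1) cycle1 => m1.
    by move: (grank_eq0 1%G); rewrite eqxx /= m1.
  have [y Gy defG] := pB x Gx ntx.
  rewrite mG; exists [tuple y]; split.
    by move=> u; rewrite !inE => /eqP->.
  by rewrite /= set2_tuple.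
move=> xs sxs m2; rewrite mG subnn; exists [tuple]; split=> //.
move: xs sxs m2 => [s sP] sxs m2; move: sP sxs m2; case: s => [|x [|y [|]]] //= sP sxs m2.
rewrite set2_tuple in m2 *.
have Gx : x \in G by apply: sxs; rewrite !inE eqxx.
have Gy : y \in G by apply: sxs; rewrite !inE eqxx orbT.
have sG : <<[set x; y]>> \subset G by rewrite gen_subG; apply/subsetP=> u;
  rewrite !inE => /orP[/eqP-> | /eqP->].
apply/eqP; rewrite eqEsubset sG /=; apply/negPn/negP => nsG.
have : cyclic <<[set x; y]>> by apply: pA; rewrite properEneq sG andbT; 
  apply: contra nsG => /eqP ->.
by rewrite -grank_le1 m2.
Qed.

End P1.

End PartP1.

Section PartP2.
Local Open Scope group_scope.

Lemma dvd_pq p q d : prime p -> prime q -> (d %| p * q)%N -> d != (p * q)%N ->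
  d = 1%N \/ prime d.
Proof.
move=> pp pq dd ne.
have [pd | npd] := boolP (p %| d)%N.
  case/dvdnP: pd => e de; subst d.
  have edq : (e %| q)%N by move: dd; rewrite [(p * q)%N]mulnC dvdn_pmul2r ?prime_gt0.
  case/primeP: (pq) => _ /(_ e edq) /= /orP[/eqP e1 | /eqP eq'].
    by subst e; rewrite mul1n; right.
  by subst e; rewrite mulnC eqxx in ne.
have cdp : coprime d p by rewrite coprime_sym prime_coprime.
move: dd; rewrite Gauss_dvdr // => dq.
case/primeP: (pq) => _ /(_ d dq) /= /orP[/eqP-> | /eqP->]; first by left.
by right.
Qed.

Section P2.
Variable gT : finGroupType.
Implicit Types G H K : {group gT}.

Lemma pq_proper G H p q : prime p -> prime q -> #|G| = (p * q)%N ->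
  H \proper G -> #|H| = 1%N \/ prime #|H|.
Proof.
move=> pp pq cG pHG; apply: (dvd_pq pp pq); first by rewrite -cG cardSg ?proper_sub.
by rewrite -cG; apply: contraTneq pHG => eHG; rewrite properEcard ltnNge eHG leqnn andbF.
Qed.

Lemma pq_PAB G p q : prime p -> prime q -> #|G| = (p * q)%N -> ~~ cyclic G ->
  PA G /\ PB G.
Proof.
move=> pp pq cG ncG; split.
  move=> H pHG; case: (pq_proper pp pq cG pHG) => [c1 | pr].
    by move/eqP: c1; rewrite -trivg_card1 => /eqP->; rewrite cyclic1.
  exact: prime_cyclic.
move=> x Gx ntx.
have pxG : <[x]> \proper G.
  rewrite properEneq cycle_subG Gx andbT; apply: contra ncG => /eqP <-.
  exact: cycle_cyclic.
have [_ [y Gy nxy]] := properP pxG.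
exists y => //.
have sKG : <<[set x; y]>> \subset G.
  by rewrite gen_subG; apply/subsetP=> u; rewrite !inE => /orP[/eqP-> | /eqP->].
apply/eqP; rewrite eqEsubset sKG /=; apply: contraT => nGK.
have pKG : <<[set x; y]>>%G \proper G by rewrite properEneq sKG andbT eq_sym
  (contra _ nGK) // => /eqP->.
have sxK : <[x]> \subset <<[set x; y]>> by rewrite cycle_subG mem_gen // !inE eqxx.
have prx : prime #[x].
  case: (pq_proper pp pq cG pxG) => // c1.
  by move: ntx; rewrite -cycle_eq1 trivg_card1 [#|_|]c1.
have: #[x] %| #|<<[set x; y]>>| by rewrite cardSg.
case: (pq_proper pp pq cG pKG) => [c1 | prK].
  by rewrite c1 dvdn1 => /eqP ox; move: prx; rewrite ox.
move/(prime_nt_dvdP prK); rewrite eqn_leq negb_and -ltnNge prime_gt1 //= => /(_ isT) ox.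
have eK : <[x]> = <<[set x; y]>> :> {set gT}.
  by apply/eqP; rewrite eqEcard sxK /= -orderE ox.
by move: nxy; rewrite eK mem_gen // !inE eqxx orbT.
Qed.

End P2.

End PartP2.

Section PartP4.

Section Aff.
Variable p : nat.
Hypothesis pp : prime p.

Local Notation F := ('F_p).

Lemma aff_inj (u : {unit F}) (b : F) : injective (fun x : F => (val u * x + b)%R).
Proof. by move=> x y /addIr /(mulrI (valP u)). Qed.

Definition aff u b : {perm F} := perm (@aff_inj u b).

Lemma affE u b x : aff u b x = (val u * x + b)%R.
Proof. by rewrite permE. Qed.

Lemma aff_injective u v b c : aff u b = aff v c -> u = v /\ b = c.
Proof.
move=> e; have e0 := congr1 (fun s : {perm F} => s 0%R) e.
have e1 := congr1 (fun s : {perm F} => s 1%R) e.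
move: e0 e1; rewrite /= !affE !mulr0 !add0r !mulr1 => e0; rewrite e0 => /addIr e1.
by split=> //; apply: val_inj.
Qed.

Lemma aff_mul u b v c : (aff u b * aff v c)%g = aff (u * v)%g (val v * b + c)%R.
Proof.
apply/permP=> x; rewrite permM !affE FinRing.val_unitM.
by rewrite mulrDr addrA mulrA [(val v * val u)%R]mulrC.
Qed.

Lemma aff1 : (1 : {perm F})%g = aff 1%g 0%R.
Proof. by apply/permP=> x; rewrite perm1 affE FinRing.val_unit1 mul1r addr0. Qed.

Variable g : {unit F}.

Lemma mem_affine s : (s \in affine_grp g) =
  [exists u in <[g]>%g, exists b : F, s == aff u b].
Proof.
rewrite inE; apply/existsP/existsP => [[u /andP[ug /existsP[b /forallP H]]] | [u /andP[ug /existsP[b /eqP ->]]]].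
  exists u; rewrite ug; apply/existsP; exists b; apply/eqP/permP=> x.
  by rewrite affE; apply/eqP.
by exists u; rewrite ug; apply/existsP; exists b; apply/forallP=> x; rewrite affE.
Qed.

Lemma affine_group_set : group_set (affine_grp g).
Proof.
apply/group_setP; split.
  by rewrite mem_affine; apply/existsP; exists 1%g; rewrite group1; apply/existsP;
    exists 0%R; rewrite aff1.
move=> s t; rewrite !mem_affine.
move=> /exists_inP[u ug /existsP[b /eqP->]] /exists_inP[v vg /existsP[c /eqP->]].
apply/exists_inP; exists (u * v)%g; first by rewrite groupM.
by apply/existsP; exists (val v * b + c)%R; rewrite aff_mul.
Qed.

Canonical affine_group := Group affine_group_set.

Lemma affine_imset : affine_grp g =
  [set aff ub.1 ub.2 | ub in setX <[g]>%g [set: F]].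
Proof.
apply/setP=> s; rewrite mem_affine; apply/exists_inP/imsetP.
  by case=> u ug /existsP[b /eqP->]; exists (u, b); rewrite // inE ug inE.
case=> [[u b]]; rewrite inE /= => /andP[ug _] ->; exists u => //.
by apply/existsP; exists b.
Qed.

Lemma card_affine : #|affine_grp g| = (#[g]%g * p)%N.
Proof.
rewrite affine_imset card_in_imset ?cardsX ?cardsT ?card_Fp //.
by move=> [u b] [v c] _ _ /= /aff_injective[-> ->].
Qed.

End Aff.

End PartP4.

Section PartP5.
Local Open Scope group_scope.

Section Iso.
Variable gT : finGroupType.
Variables (G : {group gT}) (a y : gT) (p : nat).
Hypotheses (oa : #[a] = p) (pp : prime p) (qpr : prime #[y]).
Hypotheses (nAG : <[a]> <| G) (ti : <[y]> :&: <[a]> = 1) (eG : <[y]> * <[a]> = G).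
Hypothesis ncay : ~ commute a y.

Local Notation F := ('F_p).

Lemma Ga : a \in G.
Proof. by rewrite -eG; apply/mulsgP; exists 1 a; rewrite ?group1 ?cycle_id ?mul1g. Qed.
Lemma Gy : y \in G.
Proof. by rewrite -eG; apply/mulsgP; exists y 1; rewrite ?group1 ?cycle_id ?mulg1. Qed.

Lemma ex_r : exists r, a ^ y == a ^+ r.
Proof.
have : a ^ y \in <[a]> by rewrite memJ_norm ?cycle_id // (subsetP (normal_norm nAG)) ?Gy.
by case/cycleP=> r ->; exists r.
Qed.

Definition r := xchoose ex_r.
Lemma rE : a ^ y = a ^+ r. Proof. exact/eqP/(xchooseP ex_r). Qed.

Lemma conjpow j k : (a ^+ k) ^ (y ^+ j) = a ^+ (k * r ^ j).
Proof.
elim: j => [|j IH]; first by rewrite expg0 conjg1 expn0 muln1.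
by rewrite expgSr conjgM IH conjXg rE -expgM expnS mulnCA.
Qed.

Lemma decomp h : h \in G -> exists j c, h = y ^+ j * a ^+ c.
Proof.
rewrite -eG => /mulsgP[u v /cycleP[j ->] /cycleP[c ->] ->].
by exists j, c.
Qed.

Lemma val_lt (k : F) : (k < p)%N.
Proof. by apply: leq_trans (ltn_ord k) _; rewrite Fp_cast. Qed.

Definition lg (n : gT) : F := odflt 0%R [pick k : F | a ^+ k == n].

Lemma lgE m : lg (a ^+ m) = m%:R%R.
Proof.
rewrite /lg; case: pickP => [k /eqP ek | none] /=.
  apply: val_inj; rewrite /= val_Fp_nat //.
  move/eqP: ek; rewrite eq_expg_mod_order oa modn_small ?val_lt // => /eqP ->.
  by [].
have := none (m%:R)%R; rewrite /= val_Fp_nat // -oa expg_mod_order eqxx.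
by [].
Qed.

Definition rem (h : gT) := remgr <[y]> <[a]> h.

Lemma remE j c : rem (y ^+ j * a ^+ c) = a ^+ c.
Proof. by rewrite /rem remgrMid ?mem_cycle. Qed.

Definition Fh (h : gT) (k : F) : F := lg (rem (a ^+ k * h)).

Lemma FhE j c k : Fh (y ^+ j * a ^+ c) k = ((k * r ^ j + c)%N%:R)%R.
Proof.
rewrite /Fh mulgA (conjgC (a ^+ k)) conjpow -mulgA -expgD remE lgE.
by [].
Qed.


Definition gr : F := (r%:R)%R.

Lemma natr_F (k : F) : ((k : nat)%:R)%R = k.
Proof. by apply: val_inj; rewrite /= val_Fp_nat // modn_small ?val_lt. Qed.

Lemma FhE' j c (k : F) : Fh (y ^+ j * a ^+ c) k = (k * gr ^+ j + c%:R)%R.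
Proof. by rewrite FhE natrD natrM natrX natr_F. Qed.

Lemma a_ne1 : a != 1.
Proof. by rewrite -order_eq1 oa; apply: contraTneq pp => ->. Qed.

Lemma apow_eq m n : a ^+ m = a ^+ n -> ((m%:R : F) = n%:R)%R.
Proof.
move/eqP; rewrite eq_expg_mod_order oa => /eqP e.
by rewrite -Fp_nat_mod // e Fp_nat_mod.
Qed.

Lemma apow_F m n : ((m%:R : F) = n%:R)%R -> a ^+ m = a ^+ n.
Proof.
move/(congr1 val); rewrite /= !val_Fp_nat // => e.
by rewrite -expg_mod_order oa e -oa expg_mod_order.
Qed.

Lemma gr_unit : gr \is a GRing.unit.
Proof.
rewrite unitfE; apply/eqP=> /(apow_F (n:=0)); rewrite expg0 -rE => /eqP.
by rewrite conjg_eq1 (negPf a_ne1).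
Qed.

Definition g : {unit F} := FinRing.Unit gr_unit.

Lemma order_g : #[g] = #[y].
Proof.
have gq : g ^+ #[y] = 1.
  apply: val_inj; rewrite FinRing.val_unitX /= -natrX.
  have := conjpow #[y] 1; rewrite expg_order conjg1 mul1n => /apow_eq <-.
  by [].
have g1 : g != 1.
  apply/eqP=> /(congr1 val) /= e1; apply: ncay.
  have : a ^ y = a by rewrite rE (apow_F (n:=1)) ?expg1 //; rewrite -e1.
  by move/conjg_fixP/commgP.
have : (#[g] %| #[y])%N by rewrite order_dvdn gq.
case/primeP: qpr => _ /[apply] /= /orP[/eqP | /eqP //].
by move/eqP; rewrite order_eq1 (negPf g1).
Qed.

Definition Fh' (h : gT) (k : F) : F := if h \in G then Fh h k else k.

Lemma Fh'_inj h : injective (Fh' h).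
Proof.
move=> k1 k2; rewrite /Fh'; case Gh: (h \in G) => //.
have [j [c e]] := decomp Gh; rewrite e.
rewrite !FhE' => /addIr /mulIr; apply.
by rewrite unitrX // gr_unit.
Qed.

Definition fp h : {perm F} := perm (@Fh'_inj h).

Lemma fpE h k : h \in G -> fp h k = Fh h k.
Proof. by move=> Gh; rewrite permE /Fh' Gh. Qed.

Lemma prod_decomp j1 c1 j2 c2 :
  y ^+ j1 * a ^+ c1 * (y ^+ j2 * a ^+ c2) = y ^+ (j1 + j2) * a ^+ (c1 * r ^ j2 + c2).
Proof.
rewrite mulgA -(mulgA (y ^+ j1) (a ^+ c1) (y ^+ j2)) (conjgC (a ^+ c1)) conjpow.
by rewrite !mulgA -expgD -mulgA -expgD.
Qed.

Lemma fpM : {in G &, {morph fp : x y / x * y}}.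
Proof.
move=> h1 h2 G1 G2; apply/permP=> k; rewrite permM !fpE ?groupM //.
have [j1 [c1 e1]] := decomp G1; have [j2 [c2 e2]] := decomp G2.
rewrite e1 e2 prod_decomp !FhE' natrD natrM natrX exprD.
ring.
Qed.

Definition fmor := @Morphism _ _ G fp fpM.

Lemma fmor_inj : 'injm fmor.
Proof.
apply/subsetP=> h Kh; have Gh := dom_ker Kh; have fh1 := mker Kh.
have fix1 k : Fh h k = k by have := congr1 (fun s : {perm F} => s k) fh1; rewrite /= fpE // perm1.
have [j [c e]] := decomp Gh; move: fix1; rewrite e => fix1.
have := fix1 0%R; rewrite FhE' mul0r add0r => c0.
have ac : a ^+ c = 1 by rewrite (apow_F (n:=0)) ?expg0 // c0.
have := fix1 1%R; rewrite FhE' mul1r c0 addr0 => gj.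
have yj : y ^+ j = 1.
  apply/eqP; rewrite -order_dvdn -order_g order_dvdn; apply/eqP/val_inj.
  by rewrite FinRing.val_unitX.
by rewrite ac yj mulg1 inE.
Qed.

Lemma card_G : #|G| = (#[y] * p)%N.
Proof. by rewrite -eG TI_cardMg // -oa. Qed.

Lemma iso_affine : prime #[g] /\ G \isog affine_grp g.
Proof.
rewrite order_g; split=> //; apply/isogP; exists fmor; first exact: fmor_inj.
apply/eqP; rewrite eqEcard (card_injm fmor_inj) //; apply/andP; split; last first.
  by rewrite card_affine // order_g card_G.
rewrite morphimEdom; apply/subsetP=> s /imsetP[h Gh ->].
rewrite mem_affine; have [j [c e]] := decomp Gh.
apply/exists_inP; exists (g ^+ j); first by rewrite mem_cycle.
apply/existsP; exists (c%:R)%R; apply/eqP/permP=> k.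
by rewrite affE /= fpE // e FhE' FinRing.val_unitX mulrC.
Qed.

End Iso.

End PartP5.

Section PartP6.
Local Open Scope group_scope.

Section P6.
Variable gT : finGroupType.
Implicit Types G H K M : {group gT}.

Lemma PB_center G : PB G -> 'Z(G) != 1 -> abelian G.
Proof.
move=> pB /trivgPn[z Zz ntz].
have [Gz cGz] := centerP _ _ Zz.
have [y Gy <-] := pB z Gz ntz.
rewrite abelian_gen; apply/centsP=> u Hu v Hv; move: Hu Hv; rewrite !inE.
case/orP=> /eqP-> /orP[] /eqP->; try exact: commute_refl.
  exact: cGz.
exact/commute_sym/cGz.
Qed.

Lemma abelian_case G : PA G -> ~~ cyclic G -> abelian G ->
  exists p, [/\ prime p, p.-abelem G & #|G| = (p ^ 2)%N].
Proof.
move=> pA ncG cGG.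
have [p pp rp] := rank_witness G.
have : 2 <= 'r_p(G) by rewrite -rp ltnNge -abelian_rank1_cyclic.
case/p_rank_geP=> E /pnElemPcard[sEG abE cE].
have ncE : ~~ cyclic E.
  apply/negP=> cycE; have p1 := prime_gt1 pp.
  have ntE : E :!=: 1 by rewrite -cardG_gt1 cE; nia.
  have := cyclic_abelem_prime abE cycE ntE; rewrite cE; nia.
have eEG : E :=: G.
  apply/eqP; rewrite eqEsubset sEG /=; apply: contraT => nGE.
  by case/negP: ncE; apply: pA; rewrite properEneq sEG andbT; apply: contra nGE => /eqP->.
by exists p; rewrite -eEG.
Qed.

Lemma maxTI G M K : PA G -> 'Z(G) = 1 -> maximal M G -> maximal K G -> M :!=: K ->
  M :&: K = 1.
Proof.
move=> pA Z1 maxM maxK neMK.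
have [pMG _] := maxgroupP maxM; have [pKG _] := maxgroupP maxK.
have eJ : M <*> K = G.
  have sJG : M <*> K \subset G by rewrite join_subG !proper_sub.
  apply/eqP; rewrite eqEsubset sJG /=; apply: contraT => nGJ.
  have pJ : (M <*> K)%G \proper G.
    rewrite properEneq sJG andbT.
    by apply: contra nGJ => /eqP->.
  have eJM : M <*> K = M := (maxgroupP maxM).2 _ pJ (joing_subl _ _).
  have sKM : K \subset M by rewrite -eJM joing_subr.
  by case/negP: neMK; rewrite ((maxgroupP maxK).2 _ pMG sKM).
apply/trivgP/subsetP=> z /setIP[Mz Kz]; rewrite -Z1.
have cM : abelian M by apply: cyclic_abelian; apply: pA.
have cK : abelian K by apply: cyclic_abelian; apply: pA.
have Gz : z \in G by apply: (subsetP (proper_sub pMG)).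
rewrite inE Gz /= -sub_cent1 -eJ join_subG !sub_cent1.
by rewrite (subsetP cM) // (subsetP cK).
Qed.

End P6.

Section Count.
Variable gT : finGroupType.
Implicit Types G H K M : {group gT}.

Lemma maxJ G M g : g \in G -> maximal M G -> maximal (M :^ g)%G G.
Proof. by move=> Gg; rewrite -{2}(conjGid Gg) /= maximalJ. Qed.

Lemma max_normedTI G M : PA G -> 'Z(G) = 1 -> maximal M G -> ~~ (M <| G) ->
  M :!=: 1 -> normedTI M^# G M.
Proof.
move=> pA Z1 maxM nnM ntM.
have [pMG maxP] := maxgroupP maxM.
apply/normedTI_memJ_P; split.
- by have [a Ma nta] := trivgPn _ ntM; apply/set0Pn; exists a; rewrite !inE nta.
- exact: proper_sub.
move=> a g; rewrite !inE => /andP[nta Ma] Gg.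
rewrite conjg_eq1 nta /=.
apply/idP/idP => [Mag | Mg]; last by rewrite groupJ.
apply: contraT => nMg.
have neJ : M :^ g != M.
  apply: contra nnM => /eqP eJ.
  have sMN : M \subset 'N_G(M) by rewrite subsetI proper_sub // normG.
  have : 'N_G(M) :=: G.
    apply/eqP; rewrite eqEsubset subsetIl /=; apply: contraT => nGN.
    have pN : 'N_G(M)%G \proper G by rewrite properEneq subsetIl andbT; 
      apply: contra nGN => /eqP->.
    have eNM : 'N_G(M) = M := maxP _ pN sMN.
    by case/negP: nMg; rewrite -eNM inE Gg; apply/normP.
  by move=> eN; rewrite /normal proper_sub //= -eN subsetIr.
have ti : M :&: (M :^ g)%G = 1.
  by apply: maxTI pA Z1 maxM (maxJ Gg maxM) _; rewrite eq_sym.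
have : a ^ g \in M :&: M :^ g by rewrite inE Mag memJ_conjg Ma.
by rewrite ti inE conjg_eq1 (negPf nta).
Qed.


Lemma max_of_elt G x : ~~ cyclic G -> x \in G -> x != 1 ->
  exists2 M : {group gT}, maximal M G & x \in M^#.
Proof.
move=> ncG Gx ntx.
have sxG : <[x]> \subset G by rewrite cycle_subG.
have [eG | [M maxM sxM]] := maximal_exists sxG.
  by case/negP: ncG; rewrite -eG cycle_cyclic.
by exists M; rewrite // !inE ntx -cycle_subG.
Qed.

Lemma class_support_sub G M : M \subset G -> class_support M^# G \subset G^#.
Proof.
move=> sMG; apply/subsetP=> z /imset2P[a g]; rewrite !inE => /andP[nta Ma] Gg ->.
by rewrite conjg_eq1 nta groupJ // (subsetP sMG).
Qed.

Lemma card_cs G M : PA G -> 'Z(G) = 1 -> maximal M G -> ~~ (M <| G) -> M :!=: 1 ->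
  (#|class_support M^# G| + #|G : M| = #|G|)%N /\ (2 <= #|G : M|)%N /\
  (2 * #|G : M| <= #|G|)%N.
Proof.
move=> pA Z1 maxM nnM ntM.
have [pMG _] := maxgroupP maxM.
rewrite (card_support_normedTI (max_normedTI pA Z1 maxM nnM ntM)).
have L := Lagrange (proper_sub pMG).
have i2 : (2 <= #|G : M|)%N by rewrite indexg_gt1; move: pMG; rewrite properE => /andP[].
have m2 : (2 <= #|M|)%N by rewrite cardG_gt1.
rewrite (cardsD1 1) group1 add1n /= in L m2 *.
move: L m2 i2; set a := #|M^#|; set b := #|G : M|; set n := #|G| => L m2 i2.
split; [|split] => //; nia.
Qed.

Lemma key1 (a b c : nat) : (2*b <= a+1 -> 2*c <= a+1 -> a + 1 - b + (a + 1 - c) <= a -> False)%N.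
Proof. lia. Qed.

Lemma key2 (a s i : nat) : (a + 1 = s + i -> 1 < i -> a <= s -> False)%N.
Proof. lia. Qed.

Lemma no_normal_max G : PA G -> 'Z(G) = 1 -> ~~ cyclic G ->
  (forall M, maximal M G -> ~~ (M <| G)) -> False.
Proof.
move=> pA Z1 ncG nn.
have ntG : G :!=: 1 by apply: contra ncG => /eqP->; exact: cyclic1.
have [x1 Gx1 ntx1] := trivgPn _ ntG.
have [M1 max1 x1M1] := max_of_elt ncG Gx1 ntx1.
have ntM1 : M1 :!=: 1 by apply/trivgPn; exists x1; move: x1M1; rewrite !inE => /andP[].
have [c1 [i1 l1]] := card_cs pA Z1 max1 (nn _ max1) ntM1.
set S1 := class_support M1^# G in c1.
have sS1 : S1 \subset G^# by apply: class_support_sub; case/maxgroupP: max1 => /proper_sub.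
have cG1 : (#|G^#| + 1 = #|G|)%N by rewrite [#|G|](cardsD1 1) group1 addnC.
have /subsetPn[x2 Gx2 nS1x2] : ~~ (G^# \subset S1).
  apply/negP=> /subset_leq_card h; move: h; rewrite -c1 in cG1.
  by apply: key2 cG1 i1.
move: Gx2; rewrite !inE => /andP[ntx2 Gx2].
have [M2 max2 x2M2] := max_of_elt ncG Gx2 ntx2.
have ntM2 : M2 :!=: 1 by apply/trivgPn; exists x2; move: x2M2; rewrite !inE => /andP[].
have [c2 [i2 l2]] := card_cs pA Z1 max2 (nn _ max2) ntM2.
set S2 := class_support M2^# G in c2.
have sS2 : S2 \subset G^# by apply: class_support_sub; case/maxgroupP: max2 => /proper_sub.
have dS : [disjoint S1 & S2].
  apply/pred0P=> z /=; apply/negP => /andP[].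
  move=> /imset2P[a g aM1 Gg ->] /imset2P[b h bM2 Gh eab].
  have [nta Ma] : a != 1 /\ a \in M1 by move: aM1; rewrite !inE => /andP[].
  have [ntb Mb] : b != 1 /\ b \in M2 by move: bM2; rewrite !inE => /andP[].
  have eM : (M1 :^ g) = (M2 :^ h) :> {set gT}.
    apply: contraTeq isT => neM.
    have ti := maxTI pA Z1 (maxJ Gg max1) (maxJ Gh max2) neM.
    have : a ^ g \in M1 :^ g :&: M2 :^ h by rewrite inE memJ_conjg Ma eab memJ_conjg Mb.
    by rewrite ti inE conjg_eq1 (negPf nta).
  case/negP: nS1x2.
  have -> : x2 = (x2 ^ (h * g^-1)) ^ (g * h^-1) by rewrite -conjgM !mulgA mulgKV mulgV conjg1.
  apply: memJ_class_support; last by rewrite groupM ?groupV.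
  move: x2M2; rewrite !inE conjg_eq1 => /andP[-> /=] M2x2.
  by rewrite conjgM -mem_conjg eM memJ_conjg.
have sU : S1 :|: S2 \subset G^# by rewrite subUset sS1 sS2.
have := subset_leq_card sU.
rewrite cardsU (disjoint_setI0 dS) cards0 subn0.
have e1 : #|S1| = (#|G| - #|G : M1|)%N by rewrite -c1 addnK.
have e2 : #|S2| = (#|G| - #|G : M2|)%N by rewrite -c2 addnK.
rewrite e1 e2 -cG1; rewrite -cG1 in l1 l2.
exact: key1 l1 l2.
Qed.
End Count.

End PartP6.

Section PartP7.
Local Open Scope group_scope.

Section P7.
Variable gT : finGroupType.
Implicit Types G H K M : {group gT}.

Lemma normal_max_case G M : PA G -> 'Z(G) = 1 -> ~~ cyclic G -> maximal M G -> M <| G ->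
  exists a y : gT, [/\ prime #[a], prime #[y], <[a]> <| G, <[a]> :&: <[y]> = 1
     & <[y]> * <[a]> = G] /\ ~ commute a y.
Proof.
move=> pA Z1 ncG maxM nMG.
have [pMG maxP] := maxgroupP maxM.
have [_ [y0 Gy0 nMy0]] := properP pMG.
have sy0G : <[y0]> \subset G by rewrite cycle_subG.
have [eG | [K maxK sy0K]] := maximal_exists sy0G.
  by case/negP: ncG; rewrite -eG cycle_cyclic.
have neMK : M :!=: K.
  by apply: contraNneq nMy0 => ->; rewrite -cycle_subG.
have tiMK := maxTI pA Z1 maxM maxK neMK.
have tiMy0 : M :&: <[y0]> = 1 by apply/trivgP; rewrite -tiMK setIS.
have nty0 : y0 != 1 by apply: contraNneq nMy0 => ->; rewrite group1.
have y0gt1 : (1 < #[y0])%N by rewrite order_gt1.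
have [y y0y oy] := Cauchy (pdiv_prime y0gt1) (pdiv_dvd #[y0]).
have qpr : prime #[y] by rewrite oy pdiv_prime.
have syy0 : <[y]> \subset <[y0]> by rewrite cycle_subG.
have tiMy : M :&: <[y]> = 1 by apply/trivgP; rewrite -tiMy0 setIS.
have nty : y != 1 by rewrite -order_gt1 prime_gt1.
have nMy : y \notin M.
  apply: contra nty => My; have : y \in M :&: <[y]> by rewrite inE My cycle_id.
  by rewrite tiMy inE.
have Gy : y \in G by apply: (subsetP sy0G); apply: (subsetP syy0); rewrite cycle_id.
have nMyG : <[y]> \subset 'N(M) by rewrite cycle_subG (subsetP (normal_norm nMG)).
have eG : M * <[y]> = G.
  rewrite -norm_joinEr //.
  have sJ : M <*> <[y]> \subset G by rewrite join_subG proper_sub // cycle_subG.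
  apply/eqP; rewrite eqEsubset sJ /=; apply: contraT => nGJ.
  have pJ : (M <*> <[y]>)%G \proper G.
    by rewrite properEneq sJ andbT; apply: contra nGJ => /eqP->.
  have eJM : M <*> <[y]> = M := maxP _ pJ (joing_subl _ _).
  by case/negP: nMy; rewrite -eJM mem_gen // inE cycle_id orbT.
have ntM : M :!=: 1.
  apply: contra ncG => /eqP M1; rewrite -eG M1 mul1g; exact: cycle_cyclic.
have Mgt1 : (1 < #|M|)%N by rewrite cardG_gt1.
have [a Ma oa] := Cauchy (pdiv_prime Mgt1) (pdiv_dvd #|M|).
have apr : prime #[a] by rewrite oa pdiv_prime.
have cycM : cyclic M by apply: pA.
have cM : abelian M by apply: cyclic_abelian.
have nAG : <[a]> <| G.
  apply: char_normal_trans nMG; have [m defM] := cyclicP cycM.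
  by rewrite defM; apply: cycle_subgroup_char; rewrite -defM cycle_subG.
have ncay : ~ commute a y.
  move=> cay.
  have : a \in 'Z(G).
    rewrite inE (subsetP (proper_sub pMG)) //= -sub_cent1 -eG -norm_joinEr //.
    rewrite join_subG sub_cent1 (subsetP cM) //= cycle_subG.
    by apply/cent1P; apply: commute_sym.
  rewrite Z1 inE => /eqP a1; move: apr; rewrite a1 order1.
  by [].
have sAM : <[a]> \subset M by rewrite cycle_subG.
have eMA : <[a]> = M :> {set gT}.
  apply/eqP; rewrite eqEcard sAM /=; apply: contraT; rewrite -ltnNge => ltA.
  case: ncay.
  have nAy : <[y]> \subset 'N(<[a]>) by rewrite cycle_subG (subsetP (normal_norm nAG)).
  have sH : <[a]> <*> <[y]> \subset G.
    by rewrite join_subG !cycle_subG Gy (subsetP (proper_sub pMG)).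
  have cardH : (#|<[a]> <*> <[y]>| <= #[a] * #[y])%N.
    rewrite norm_joinEr // [X in (_ <= X)%N]mul_cardG.
    by rewrite leq_pmulr // cardG_gt0.
  have cardG : #|G| = (#|M| * #[y])%N by rewrite -eG TI_cardMg.
  have pH : (<[a]> <*> <[y]>)%G \proper G.
    rewrite properEcard sH /= cardG; apply: leq_ltn_trans cardH _.
    by rewrite ltn_pmul2r ?order_gt0 // -orderE.
  have cH := cyclic_abelian (pA _ pH).
  have aH : a \in <[a]> <*> <[y]> by rewrite (subsetP (joing_subl _ _)) ?cycle_id.
  have yH : y \in <[a]> <*> <[y]> by rewrite (subsetP (joing_subr _ _)) ?cycle_id.
  exact: (centsP cH _ aH _ yH).
exists a, y; split=> //; split=> //.
- by rewrite eMA.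
- by rewrite eMA -eG; apply: normC.
Qed.

End P7.

End PartP7.

Section PartP8.
Local Open Scope group_scope.

Section ZZ.
Variable p : nat.
Hypothesis pp : prime p.

Lemma card_ZZ : #|[set: 'Z_p * 'Z_p]| = (p * p)%N.
Proof. by rewrite cardsT card_prod card_ord Zp_cast ?prime_gt1. Qed.

Lemma abelem_ZZ : p.-abelem [set: 'Z_p * 'Z_p].
Proof.
apply/abelemP => //; split.
  apply/centsP=> u _ v _; case: u v => [u1 u2] [v1 v2].
  rewrite /commute; congr pair; apply: addrC.
move=> [x1 x2] _.
have eP : forall n, (x1, x2) ^+ n = (x1 ^+ n, x2 ^+ n).
  by elim=> [|n IH] //; rewrite !expgS IH.
have eZ : forall z : 'Z_p, z ^+ p = 1.
  move=> z; have := expg_cardG (in_setT z); rewrite cardsT card_ord Zp_cast ?prime_gt1 //.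
by rewrite eP !eZ.
Qed.
End ZZ.

End PartP8.

Theorem lemma2p8 (gT : finGroupType) (G : {group gT}) :
  gen_rank G = 2 ->
  ((flexible G 1 /\ flexible G 2) <->
   ((exists p : nat, prime p /\ G \isog [set: 'Z_p * 'Z_p]) \/
    (exists (p : nat) (g : {unit 'F_p}),
       prime p /\ prime #[g]%g /\ G \isog affine_grp g))).
Proof.
move=> mG.
have ncG : ~~ cyclic G by rewrite -grank_le1 mG.
rewrite flex_PAB //; split.
  case=> pA pB.
  have [nZ | Z1] := boolP ('Z(G) != 1)%g.
    have [p [pp abG cG]] := abelian_case pA ncG (PB_center pB nZ).
    left; exists p; split=> //.
    rewrite (isog_abelem_card _ abG) (abelem_ZZ pp) /=.
    by rewrite (card_ZZ pp) cG -mulnn.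
  move/negPn/eqP: Z1 => Z1.
  have [/existsP[M /andP[maxM nMG]] | nn] :=
    boolP [exists M : {group gT}, maximal M G && (M <| G)%g].
    have [a [y [[apr ypr nAG ti eG] ncay]]] := normal_max_case pA Z1 ncG maxM nMG.
    right; exists #[a]%g.
    have tiYA : (<[y]> :&: <[a]>)%g = 1%g by rewrite setIC.
    have [pg iso] := iso_affine (erefl _) apr ypr nAG tiYA eG ncay.
    by eexists; split; [exact: apr | split; [exact: pg | exact: iso]].
  exfalso; apply: (no_normal_max pA Z1 ncG) => M maxM.
  by apply: contra nn => nMG; apply/existsP; exists M; rewrite maxM.
case=> [[p [pp iso]] | [p [g [pp [pg iso]]]]].
  apply: (pq_PAB pp pp) => //.
  by rewrite (card_isog iso) (card_ZZ pp).
apply: (pq_PAB pp pg) => //.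
by rewrite mulnC -(card_affine pp g) (card_isog (H := affine_group g) iso).
Qed.
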